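(* Every graph that is $C_3$-free and probe $P_5$-free is $3$-colourable. In particular, every probe $(C_3,P_5)$-free graph is $3$-colourable.
   Context: All graphs are finite and simple. $C_3$ is the triangle and $P_5$ is the path on $5$ vertices. A graph is $H$-free if it contains no induced subgraph isomorphic to $H$, and $(H_1,H_2)$-free if it is both $H_1$-free and $H_2$-free. For $G=(V,E)$ and a set $F$ of pairs of vertices, $G+F=(V,E\cup F)$. A graph $G$ is probe $P_5$-free if there is an independent set $N$ of $G$ and a set $F\subseteq\binom{N}{2}$ such that $G+F$ is $P_5$-free; $G$ is probe $(C_3,P_5)$-free if there is an independent set $N$ and $F\subseteq\binom{N}{2}$ such that $G+F$ is $(C_3,P_5)$-free. *)

(* Defs.v *)
From mathcomp Require Import all_boot.
Set Implicit Arguments. Unset Strict Implicit. Unset Printing Implicit Defensive.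

Definition simple_graph (T : finType) (e : rel T) : Prop :=
  symmetric e /\ irreflexive e.

Definition C3 : rel 'I_3 := fun i j => i != j.
Definition P5 : rel 'I_5 := fun i j => (i.+1 == j :> nat) || (j.+1 == i :> nat).

Definition has_induced (T : finType) (e : rel T) (k : nat) (h : rel 'I_k) : Prop :=
  exists f : 'I_k -> T, injective f /\ forall i j, i != j -> e (f i) (f j) = h i j.

Definition H_free (T : finType) (e : rel T) (k : nat) (h : rel 'I_k) : Prop :=
  ~ has_induced e h.

(* G + F : union of edge sets (F taken as a set of unordered pairs,
   represented by a relation and symmetrised). *)
Definition add_edges (T : finType) (e F : rel T) : rel T :=
  fun x y => [|| e x y, F x y | F y x].

Definition independent (T : finType) (e : rel T) (N : {set T}) : Prop :=
  forall x y, x \in N -> y \in N -> ~~ e x y.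

Definition pairs_in (T : finType) (N : {set T}) (F : rel T) : Prop :=
  forall x y, F x y -> [/\ x \in N, y \in N & x != y].

Definition probe_P5_free (T : finType) (e : rel T) : Prop :=
  exists (N : {set T}) (F : rel T),
    independent e N /\ pairs_in N F /\ H_free (add_edges e F) P5.

Definition probe_C3_P5_free (T : finType) (e : rel T) : Prop :=
  exists (N : {set T}) (F : rel T),
    independent e N /\ pairs_in N F /\
    H_free (add_edges e F) C3 /\ H_free (add_edges e F) P5.

Definition colourable (T : finType) (e : rel T) (k : nat) : Prop :=
  exists c : T -> 'I_k, forall x y, e x y -> c x != c y.

(* Main.v *)
Require Import Defs.
From mathcomp Require Import all_boot.
From Stdlib Require Import Classical.
Set Implicit Arguments. Unset Strict Implicit. Unset Printing Implicit Defensive.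


Lemma mkP5 (T : finType) (E : rel T) (a b c d f : T) :
  symmetric E -> irreflexive E ->
  E a b -> E b c -> E c d -> E d f ->
  ~~ E a c -> ~~ E a d -> ~~ E a f -> ~~ E b d -> ~~ E b f -> ~~ E c f ->
  has_induced E P5.
Proof.
move=> sE iE ab bc cd df /negbTE nac /negbTE nad /negbTE naf /negbTE nbd /negbTE nbf /negbTE ncf.
have ba : E b a = true by rewrite sE.
have cb : E c b = true by rewrite sE.
have dc : E d c = true by rewrite sE.
have fd : E f d = true by rewrite sE.
have ca : E c a = false by rewrite sE.
have da : E d a = false by rewrite sE.
have fa : E f a = false by rewrite sE.
have db : E d b = false by rewrite sE.
have fb : E f b = false by rewrite sE.
have fc : E f c = false by rewrite sE.
have ab' : E a b = true by [].
have bc' : E b c = true by [].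
have cd' : E c d = true by [].
have df' : E d f = true by [].
have iaa := iE a. have ibb := iE b. have icc := iE c. have idd := iE d. have iff := iE f.
pose g (i : 'I_5) := match val i with 0 => a | 1 => b | 2 => c | 3 => d | _ => f end.
exists g; split.
- move=> [i Hi] [j Hj]; rewrite /g /= => Heq; apply: val_inj => /=.
  move: Hi Hj Heq; case: i => [|[|[|[|[|i]]]]]; case: j => [|[|[|[|[|j]]]]] //= _ _ Heq;
  subst; congruence.
- move=> [i Hi] [j Hj]; rewrite /g /P5 /=.
  move: Hi Hj; case: i => [|[|[|[|[|i]]]]]; case: j => [|[|[|[|[|j]]]]] //= _ _ _; congruence.
Qed.

Lemma mkC3 (T : finType) (E : rel T) (a b c : T) :
  symmetric E -> irreflexive E -> E a b -> E b c -> E a c -> has_induced E C3.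
Proof.
move=> sE iE ab bc ac.
have ba : E b a = true by rewrite sE.
have cb : E c b = true by rewrite sE.
have ca : E c a = true by rewrite sE.
have ab' : E a b = true by [].
have bc' : E b c = true by [].
have ac' : E a c = true by [].
have iaa := iE a. have ibb := iE b. have icc := iE c.
pose g (i : 'I_3) := match val i with 0 => a | 1 => b | _ => c end.
exists g; split.
- move=> [i Hi] [j Hj]; rewrite /g /= => Heq; apply: val_inj => /=.
  move: Hi Hj Heq; case: i => [|[|[|i]]]; case: j => [|[|[|j]]] //= _ _ Heq;
  subst; congruence.
- move=> [i Hi] [j Hj]; rewrite /g /C3 /=.
  move: Hi Hj; case: i => [|[|[|i]]]; case: j => [|[|[|j]]] //= _ _ _; congruence.
Qed.

Lemma add_e (T : finType) (e F : rel T) x y : e x y -> add_edges e F x y.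
Proof. by rewrite /add_edges => ->. Qed.

Lemma add_S (T : finType) (e F : rel T) (N : {set T}) x y :
  pairs_in N F -> (x \notin N) || (y \notin N) -> add_edges e F x y = e x y.
Proof.
move=> pF hS; rewrite /add_edges.
have h1 : F x y = false.
  apply/negbTE/negP => /pF [hx hy _]; by move: hS; rewrite hx hy.
have h2 : F y x = false.
  apply/negbTE/negP => /pF [hx hy _]; by move: hS; rewrite hx hy.
by rewrite h1 h2 !orbF.
Qed.

Lemma add_sym (T : finType) (e F : rel T) : symmetric e -> symmetric (add_edges e F).
Proof. by move=> se x y; rewrite /add_edges se; congr (_ || _); rewrite orbC. Qed.

Lemma add_irr (T : finType) (e F : rel T) (N : {set T}) :
  irreflexive e -> pairs_in N F -> irreflexive (add_edges e F).
Proof.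
move=> ie pF x; rewrite /add_edges ie /=.
have h : F x x = false by apply/negbTE/negP => /pF [_ _]; rewrite eqxx.
by rewrite h.
Qed.

Lemma tri (T : finType) (e : rel T) x y z :
  symmetric e -> irreflexive e -> H_free e C3 -> e x y -> e y z -> e x z -> False.
Proof. move=> se ie tf xy yz xz; apply: tf; exact: (mkC3 se ie xy yz xz). Qed.

Lemma noP5 (T : finType) (e F : rel T) (N : {set T}) (a b c d f : T) :
  symmetric e -> irreflexive e -> pairs_in N F -> H_free (add_edges e F) P5 ->
  c \notin N -> d \notin N -> f \notin N ->
  e a b -> e b c -> e c d -> e d f ->
  ~~ e a c -> ~~ e a d -> ~~ e a f -> ~~ e b d -> ~~ e b f -> ~~ e c f -> False.
Proof.
move=> se ie pF p5 cN dN fN ab bc cd df nac nad naf nbd nbf ncf.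
have sub : forall x y, (x \notin N) || (y \notin N) -> add_edges e F x y = e x y.
  by move=> x y; apply: add_S.
apply: p5; apply: (@mkP5 _ _ a b c d f (add_sym F se) (add_irr ie pF)); try exact: add_e;
rewrite sub ?cN ?dN ?fN ?orbT //.
Qed.

Definition c5 (T : finType) (e : rel T) a b c d f :=
  [&& e a b, e b c, e c d, e d f, e f a, ~~ e a c, ~~ e a d, ~~ e b d, ~~ e b f & ~~ e c f].

Lemma c5rot (T : finType) (e : rel T) a b c d f :
  symmetric e -> c5 e a b c d f -> c5 e b c d f a.
Proof.
move=> se /and5P[ab bc cd df /and5P[fa nac nad nbd /andP[nbf ncf]]].
by rewrite /c5 bc cd df fa ab nbd nbf ncf (se c a) nac (se d a) nad.
Qed.

Lemma L1 (T : finType) (e F : rel T) (N : {set T}) a b c d f x y :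
  symmetric e -> irreflexive e -> H_free e C3 -> pairs_in N F -> H_free (add_edges e F) P5 ->
  c5 e a b c d f -> a \notin N -> b \notin N -> c \notin N ->
  e x a -> ~~ e x c -> e y x -> ~~ e y a -> ~~ e y b -> ~~ e y c -> False.
Proof.
move=> se ie tf pF p5 /and5P[ab bc cd df /and5P[fa nac nad nbd /andP[nbf ncf]]] aN bN cN.
move=> xa nxc yx nya nyb nyc.
apply: (noP5 (a:=y) (b:=x) (c:=a) (d:=b) (f:=c) se ie pF p5) => //.
by apply/negP => xb; apply: (tri se ie tf xa ab xb).
Qed.

Lemma L2 (T : finType) (e F : rel T) (N : {set T}) a b c d f x y :
  symmetric e -> irreflexive e -> H_free e C3 -> pairs_in N F -> H_free (add_edges e F) P5 ->
  c5 e a b c d f -> a \notin N -> b \notin N -> c \notin N -> d \notin N -> f \notin N ->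
  e x a -> e y x -> ~~ e y a -> ~~ e y b -> ~~ e y c -> ~~ e y d -> ~~ e y f -> False.
Proof.
move=> se ie tf pF p5 C aN bN cN dN fN xa yx nya nyb nyc nyd nyf.
case: (boolP (e x c)) => xc.
- apply: (L1 se ie tf pF p5 (c5rot se (c5rot se C)) cN dN fN xc _ yx nyc nyd nyf).
  apply/negP => xf; move: C => /and5P[ab bc cd df /and5P[fa _ _ _ _]].
  exact: (tri se ie tf xf fa xa).
- exact: (L1 se ie tf pF p5 C aN bN cN xa xc yx nya nyb nyc).
Qed.

Lemma L3 (T : finType) (e F : rel T) (N : {set T}) a b c d f x :
  symmetric e -> irreflexive e -> H_free e C3 -> pairs_in N F -> H_free (add_edges e F) P5 ->
  c5 e a b c d f -> b \notin N -> c \notin N -> d \notin N ->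
  e x a -> e x c || e x d.
Proof.
move=> se ie tf pF p5 /and5P[ab bc cd df /and5P[fa nac nad nbd /andP[nbf ncf]]] bN cN dN xa.
case xc: (e x c) => //; case xd: (e x d) => //; exfalso.
apply: (noP5 (a:=x) (b:=a) (c:=b) (d:=c) (f:=d) se ie pF p5) => //; try by rewrite ?xc ?xd.
by apply/negP => xb; apply: (tri se ie tf xa ab xb).
Qed.

Lemma L4 (T : finType) (e F : rel T) (N : {set T}) c0 c1 c2 c3 c4 x :
  symmetric e -> irreflexive e -> H_free e C3 -> pairs_in N F -> H_free (add_edges e F) P5 ->
  c5 e c0 c1 c2 c3 c4 -> c0 \notin N -> c1 \notin N -> c2 \notin N -> c3 \notin N -> c4 \notin N ->
  [|| e x c0, e x c1, e x c2, e x c3 | e x c4] -> [|| e x c0, e x c1 | e x c2].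
Proof.
move=> se ie tf pF p5 C n0 n1 n2 n3 n4.
case/orP => [->//|/orP[->|/orP[->|/orP[h|h]]]]; rewrite ?orbT //.
- have C' := c5rot se (c5rot se (c5rot se C)).
  by case/orP: (L3 se ie tf pF p5 C' n4 n0 n1 h) => ->; rewrite ?orbT.
- have C' := c5rot se (c5rot se (c5rot se (c5rot se C))).
  by case/orP: (L3 se ie tf pF p5 C' n0 n1 n2 h) => ->; rewrite ?orbT.
Qed.

Definition proper_on (T : finType) (K : eqType) (e : rel T) (B : {set T}) (c : T -> K) :=
  forall x y, x \in B -> y \in B -> e x y -> c x != c y.

Lemma copy_col (T : finType) (K : eqType) (e : rel T) (B : {set T}) u v :
  symmetric e -> irreflexive e -> u \in B -> v \in B -> u != v ->
  (forall z, z \in B -> e u z -> e v z) ->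
  (exists c : T -> K, proper_on e (B :\ u) c) -> exists c : T -> K, proper_on e B c.
Proof.
move=> se ie uB vB uv dom [c pc].
exists (fun x => if x == u then c v else c x) => x y xB yB xy.
have vB' : v \in B :\ u by rewrite !inE eq_sym uv.
case: (eqVneq x u) => [exu|xu]; case: (eqVneq y u) => [eyu|yu].
- by move: xy; rewrite exu eyu ie.
- apply: pc => //; first by rewrite !inE yu.
  by apply: dom => //; rewrite -exu.
- rewrite eq_sym; apply: pc => //; first by rewrite !inE xu.
  by apply: dom => //; rewrite -eyu se.
- by apply: pc => //; rewrite !inE ?xu ?yu.
Qed.

Lemma empty_col (T : finType) (K : eqType) (e : rel T) (B : {set T}) (k : K) :
  #|B| = 0 -> exists c : T -> K, proper_on e B c.
Proof.
move=> /cards0_eq ->; exists (fun _ => k) => x y; by rewrite inE.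
Qed.

Lemma two_col (T : finType) (e F : rel T) (N : {set T}) :
  symmetric e -> irreflexive e -> H_free e C3 -> pairs_in N F -> H_free (add_edges e F) P5 ->
  forall n (B : {set T}), #|B| <= n -> (forall x, x \in B -> x \notin N) ->
  ~ (exists a b c d f, [/\ a \in B, b \in B, c \in B, d \in B & f \in B] /\ c5 e a b c d f) ->
  exists col : T -> bool, proper_on e B col.
Proof.
move=> se ie tf pF p5 n; elim: n => [|n IH] B.
  by rewrite leqn0 => /eqP B0 _ _; apply: (empty_col _ true).
move=> Bn BS noC5.
have IHs : forall u, u \in B -> exists col : T -> bool, proper_on e (B :\ u) col.
  move=> u uB; apply: IH.
  - by move: Bn; rewrite (cardsD1 u B) uB add1n ltnS.
  - by move=> x; rewrite inE => /andP[_ /BS].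
  - move=> [a [b [c [d [f [[aB bB cB dB fB] C]]]]]]; apply: noC5.
    have sub : forall z, z \in B :\ u -> z \in B by move=> z; rewrite inE => /andP[].
    by exists a, b, c, d, f; split=> //; split; apply: sub.
case: (set_0Vmem B) => [B0|[w wB]].
  by apply: (empty_col _ true); rewrite B0 cards0.
case: (boolP [exists u, exists v, [&& u \in B, v \in B, u != v, e w u & e w v]]).
- move=> /existsP[u /existsP[v /and5P[uB vB uv wu wv]]].
  have nuv : ~~ e u v.
    have uw : e u w by rewrite se.
    have vw : e v w by rewrite se.
    by apply/negP => uv'; apply: (tri se ie tf uv' vw uw).
  case: (boolP [forall z, (z \in B) ==> e u z ==> e v z]) => [/forallP dom|ndom].
    apply: (copy_col se ie uB vB uv _ (IHs u uB)) => z zB uz.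
    by move: (dom z); rewrite zB uz.
  case: (boolP [forall z, (z \in B) ==> e v z ==> e u z]) => [/forallP dom|ndom'].
    apply: (copy_col se ie vB uB _ _ (IHs v vB)); first by rewrite eq_sym.
    by move=> z zB vz; move: (dom z); rewrite zB vz.
  exfalso.
  move: ndom => /forallPn[a]; rewrite negb_imply => /andP[aB]; rewrite negb_imply => /andP[ua nva].
  move: ndom' => /forallPn[b]; rewrite negb_imply => /andP[bB]; rewrite negb_imply => /andP[vb nub].
  have nwa : ~~ e w a by apply/negP => wa; apply: (tri se ie tf wu ua wa).
  have nwb : ~~ e w b by apply/negP => wb; apply: (tri se ie tf wv vb wb).
  case: (boolP (e a b)) => ab.
  + apply: noC5; exists a, u, w, v, b; split=> //.
    by rewrite /c5 (se a u) ua (se u w) wu wv vb (se b a) ab (se a w) nwa (se a v) nva nuv nub nwb.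
  + apply: (noP5 (a:=a) (b:=u) (c:=w) (d:=v) (f:=b) se ie pF p5) => //; try exact: BS.
    all: try by rewrite se.
- move=> /existsPn nb.
  have [col pc] := IHs w wB.
  exists (fun x => if x == w then (if [pick u in B | e w u] is Some u then ~~ col u else true)
                   else col x).
  have uniq_nb : forall y, y \in B -> e w y -> [pick u in B | e w u] = Some y.
    move=> y yB wy; case: pickP => [u /andP[uB wu]|none]; last by move: (none y); rewrite yB wy.
    case: (eqVneq u y) => [->//|uy].
    by move: (nb u) => /existsPn /(_ y); rewrite uB yB uy wu wy.
  have pw : forall y, y \in B -> e w y ->
      (if [pick u in B | e w u] is Some u then ~~ col u else true) != col y.
    by move=> y yB wy; rewrite (uniq_nb y yB wy); case: (col y).
  move=> x y xB yB xy /=.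
  have yw' : forall z, e w z -> z != w by move=> z wz; apply/eqP => ez; move: wz; rewrite ez ie.
  case: (eqVneq x w) => [exw|xw]; case: (eqVneq y w) => [eyw|yw].
  + by move: xy; rewrite exw eyw ie.
  + apply: pw => //; by rewrite -exw.
  + rewrite eq_sym; apply: pw => //; by rewrite se -eyw.
  + by apply: pc => //; rewrite !inE ?xw ?yw.
Qed.

Definition i0 : 'I_3 := @Ordinal 3 0 isT.
Definition i1 : 'I_3 := @Ordinal 3 1 isT.
Definition i2 : 'I_3 := @Ordinal 3 2 isT.

Lemma three_col (T : finType) (e F : rel T) (N : {set T}) :
  symmetric e -> irreflexive e -> H_free e C3 -> independent e N ->
  pairs_in N F -> H_free (add_edges e F) P5 ->
  forall n (A : {set T}), #|A| <= n -> exists c : T -> 'I_3, proper_on e A c.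
Proof.
move=> se ie tf indN pF p5 n; elim: n => [|n IH] A.
  by rewrite leqn0 => /eqP A0; apply: (empty_col _ i0).
move=> An.
have IHs : forall B : {set T}, #|B| < #|A| -> exists c : T -> 'I_3, proper_on e B c.
  by move=> B BA; apply: IH; rewrite -ltnS; apply: leq_trans BA An.
case: (classic (exists B : {set T}, [/\ B \subset A, B != set0, B != A &
          forall x y, x \in B -> y \in A :\: B -> ~~ e x y])).
  move=> [B [BA B0 BnA cut]].
  have [cB pB] : exists c : T -> 'I_3, proper_on e B c.
    by apply: IHs; apply: proper_card; rewrite properEneq BnA BA.
  have [cR pR] : exists c : T -> 'I_3, proper_on e (A :\: B) c.
    apply: IHs; rewrite cardsD (setIidPr BA).
    have h1 : 0 < #|B| by rewrite card_gt0.
    have h2 : #|B| <= #|A| by apply: subset_leq_card.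
    by rewrite ltn_subrL h1 /=; apply: leq_trans h1 h2.
  exists (fun x => if x \in B then cB x else cR x) => x y xA yA xy /=.
  case xB: (x \in B); case yB: (y \in B).
  - by apply: pB.
  - by move: (cut x y xB); rewrite !inE yB yA xy => /(_ isT).
  - by move: (cut y x yB); rewrite !inE xB xA se xy => /(_ isT).
  - by apply: pR => //; rewrite !inE ?xB ?yB ?xA ?yA.
move=> nocut.
have conn : forall B : {set T}, B \subset A -> B != set0 -> B != A ->
    exists x y, [/\ x \in B, y \in A :\: B & e x y].
  move=> B BA B0 BnA; apply: NNPP => nex; apply: nocut; exists B; split=> // x y xB yB.
  by apply/negP => xy; apply: nex; exists x, y.
case: (classic (exists c0 c1 c2 c3 c4, [/\ c0 \in A :\: N, c1 \in A :\: N, c2 \in A :\: N,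
          c3 \in A :\: N & c4 \in A :\: N] /\ c5 e c0 c1 c2 c3 c4)).
  move=> [c0 [c1 [c2 [c3 [c4 [[h0 h1 h2 h3 h4] C]]]]]].
  move: h0 h1 h2 h3 h4; rewrite !inE => /andP[n0 a0] /andP[n1 a1] /andP[n2 a2] /andP[n3 a3] /andP[n4 a4].
  have C1 := c5rot se C.
  have C2 := c5rot se C1.
  have C3' := c5rot se C2.
  have C4 := c5rot se C3'.
  have cover : forall x, x \in A -> [|| e x c0, e x c1, e x c2, e x c3 | e x c4].
    move=> x0 x0A; apply: NNPP => nx0.
    pose D := [set x in A | [|| e x c0, e x c1, e x c2, e x c3 | e x c4]].
    have [x [y [xD yAD xy]]] : exists x y, [/\ x \in D, y \in A :\: D & e x y].
      apply: conn.
      - by apply/subsetP => z; rewrite /D inE => /andP[].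
      - apply/set0Pn; exists c0; rewrite /D inE a0 /=.
        by move: C => /and5P[-> _ _ _ _]; rewrite orbT.
      - apply/eqP => DA; apply: nx0; have : x0 \in D by rewrite DA.
        rewrite /D.
        by rewrite inE => /andP[_ ->].
    move: xD yAD; rewrite !inE => /andP[xA xc] /andP[nyD yA].
    rewrite yA /= !negb_or in nyD.
    move: nyD => /and5P[ny0 ny1 ny2 ny3 ny4].
    have yx : e y x by rewrite se.
    case/orP: xc => [xc|/orP[xc|/orP[xc|/orP[xc|xc]]]].
    - exact: (L2 se ie tf pF p5 C n0 n1 n2 n3 n4 xc yx ny0 ny1 ny2 ny3 ny4).
    - exact: (L2 se ie tf pF p5 C1 n1 n2 n3 n4 n0 xc yx ny1 ny2 ny3 ny4 ny0).
    - exact: (L2 se ie tf pF p5 C2 n2 n3 n4 n0 n1 xc yx ny2 ny3 ny4 ny0 ny1).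
    - exact: (L2 se ie tf pF p5 C3' n3 n4 n0 n1 n2 xc yx ny3 ny4 ny0 ny1 ny2).
    - exact: (L2 se ie tf pF p5 C4 n4 n0 n1 n2 n3 xc yx ny4 ny0 ny1 ny2 ny3).
  exists (fun x => if e x c1 then i0 else if e x c2 then i1 else i2).
  move=> x y xA yA xy /=.
  have cx := L4 se ie tf pF p5 C n0 n1 n2 n3 n4 (cover x xA).
  have cy := L4 se ie tf pF p5 C n0 n1 n2 n3 n4 (cover y yA).
  case x1: (e x c1); case y1: (e y c1).
  - by exfalso; apply: (tri se ie tf xy y1 x1).
  - by case: (e y c2).
  - by case: (e x c2).
  case x2: (e x c2); case y2: (e y c2) => //.
  - by exfalso; apply: (tri se ie tf xy y2 x2).
  have cx0 : e x c0 by move: cx; rewrite x1 x2; case: (e x c0).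
  have cy0 : e y c0 by move: cy; rewrite y1 y2; case: (e y c0).
  by exfalso; apply: (tri se ie tf xy cy0 cx0).
move=> noC5.
have [b pb] : exists col : T -> bool, proper_on e (A :\: N) col.
  apply: (two_col se ie tf pF p5 (leqnn #|A :\: N|)).
  - by move=> x; rewrite inE => /andP[].
  - move=> [a [b0 [c [d [f [[aB bB cB dB fB] C]]]]]]; apply: noC5.
    by exists a, b0, c, d, f.
exists (fun x => if x \in N then i2 else if b x then i0 else i1).
move=> x y xA yA xy /=.
case xN: (x \in N); case yN: (y \in N).
- by move: (indN x y xN yN); rewrite xy.
- by case: (b y).
- by case: (b x).
- have := pb x y; rewrite !inE xN yN xA yA xy => /(_ isT isT isT).
  by case: (b x); case: (b y).
Qed.

Theorem mainTheorem4 :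
  (forall (T : finType) (e : rel T), simple_graph e ->
     H_free e C3 -> probe_P5_free e -> colourable e 3) /\
  (forall (T : finType) (e : rel T), simple_graph e ->
     probe_C3_P5_free e -> colourable e 3).
Proof.
split.
- move=> T e [se ie] tf [N [F [indN [pF p5]]]].
  have [c pc] := three_col se ie tf indN pF p5 (leqnn #|[set: T]|).
  by exists c => x y xy; apply: pc; rewrite ?inE.
- move=> T e [se ie] [N [F [indN [pF [c3 p5]]]]].
  have tf : H_free e C3.
    move=> [g [gi gh]]; apply: c3; exists g; split=> // i j ij.
    by rewrite /add_edges gh // /C3 ij.
  have [c pc] := three_col se ie tf indN pF p5 (leqnn #|[set: T]|).
  by exists c => x y xy; apply: pc; rewrite ?inE.
Qed.
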